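(* Let $\mathcal{G}$ be a MAG on vertex set $V$ and let $u$ be any structural imset over $V$ such that $\mathcal{I}_u=\mathcal{I}_{\mathcal{G}}$. Let $c$ be its characteristic imset, $c(S)=1-\sum_{T:\,S\subseteq T\subseteq V}u(T)$. Then $c$ is integer valued and: (i) if $S\in\mathcal{S}(\mathcal{G})$ then $c(S)=1$; (ii) if $S\notin\mathcal{S}(\mathcal{G})$ then $c(S)\le 0$.
   Context: A MAG is an acyclic directed mixed graph (directed and bidirected edges, no directed cycles) with $\mathrm{sib}(v)\cap\mathrm{an}(v)=\emptyset$ for all $v$ and in which every nonadjacent pair is m-separated by some set (a path is m-connecting given $C$ if all its colliders lie in $\mathrm{an}(C)$ and all noncolliders lie outside $C$). $\mathrm{barren}(W)=\{w\in W:\mathrm{de}(w)\cap W=\{w\}\}$; a nonempty $H$ is a head if $\mathrm{barren}(H)=H$ and $H$ lies in one district of $\mathcal{G}_{\mathrm{an}(H)}$; $\mathrm{tail}(H)=(\mathrm{dis}_{\mathrm{an}(H)}(H)\setminus H)\cup\mathrm{pa}(\mathrm{dis}_{\mathrm{an}(H)}(H))$; $\mathcal{S}(\mathcal{G})=\{H\cup A:H\text{ a head},A\subseteq\mathrm{tail}(H)\}$. Imsets are integer functions on $\mathcal{P}(V)$; $\delta_A$ is the indicator of $A$; $u_{\langle A,B|C\rangle}=\delta_{A\cup B\cup C}-\delta_{A\cup C}-\delta_{B\cup C}+\delta_C$ for disjoint $A,B,C$, elementary when $|A|=|B|=1$; combinatorial = nonnegative integer combination of elementary imsets; structural = some positive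 integer multiple is combinatorial. $\langle A,B|C\rangle$ is represented in $u$ if $ku-u_{\langle A,B|C\rangle}$ is combinatorial for some $k\in\mathbb{N}$; $\mathcal{I}_u$ is the set of represented triples; $\mathcal{I}_{\mathcal{G}}$ is the set of triples $\langle A,B|C\rangle$ with $A$ and $B$ m-separated by $C$. *)

(* Defs.v *)
From HB Require Import structures.
From mathcomp Require Import all_boot all_order all_algebra.
Set Implicit Arguments. Unset Strict Implicit. Unset Printing Implicit Defensive.
Import Order.TTheory GRing.Theory Num.Theory.

Section MAG.
Variable V : finType.
(* d x y : directed edge x -> y ;  b x y : bidirected edge x <-> y *)
Variables (d b : rel V).

Definition adj (x y : V) : bool := [|| d x y, d y x | b x y].
Definition arrowhead (x y : V) : bool := d x y || b x y.

(* ancestors of a set (each vertex is its own ancestor) *)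
Definition anc (A : {set V}) : {set V} := [set w | [exists a in A, connect d w a]].

Definition mconnecting (C : {set V}) (a : V) (q : seq V) : Prop :=
  let p := a :: q in
  [/\ uniq p,
      (forall i, i.+1 < size p -> adj (nth a p i) (nth a p i.+1)) &
      (forall i, 0 < i -> i.+1 < size p ->
         if arrowhead (nth a p i.-1) (nth a p i) && arrowhead (nth a p i.+1) (nth a p i)
         then nth a p i \in anc C
         else nth a p i \notin C)].

Definition msep (A B C : {set V}) : Prop :=
  forall a bb q, a \in A -> bb \in B -> last a q = bb -> ~ mconnecting C a q.

Definition is_MAG : Prop :=
  [/\ [/\ irreflexive d, irreflexive b & symmetric b],
      (forall x y, d x y -> ~~ connect d y x),
      (forall v w, b v w -> ~~ connect d w v) &
      (forall x y, x != y -> ~~ adj x y ->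
         exists C : {set V}, [/\ x \notin C, y \notin C & msep [set x] [set y] C])].

Definition barren (W : {set V}) : {set V} :=
  [set w in W | [forall w' in W, connect d w w' ==> (w' == w)]].

Definition brel_in (W : {set V}) : rel V := fun x y => [&& x \in W, y \in W & b x y].

Definition dis_in (W : {set V}) (v : V) : {set V} :=
  [set w in W | connect (brel_in W) v w].

Definition is_head (H : {set V}) : Prop :=
  [/\ H != set0, barren H = H &
      forall h1 h2, h1 \in H -> h2 \in H -> connect (brel_in (anc H)) h1 h2].

Definition dis_head (H : {set V}) : {set V} := \bigcup_(h in H) dis_in (anc H) h.

Definition pa (D : {set V}) : {set V} := [set w | [exists x in D, d w x]].

Definition tail (H : {set V}) : {set V} := (dis_head H :\: H) :|: pa (dis_head H).

Definition in_SG (S : {set V}) : Prop :=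
  exists H A : {set V}, [/\ is_head H, A \subset tail H & S = H :|: A].

End MAG.

Section Imsets.
Variable V : finType.
Local Open Scope ring_scope.

Definition imsetV := {set V} -> int.

Definition delta (A : {set V}) : imsetV := fun S => (S == A)%:Z.

Definition u_triple (A B C : {set V}) : imsetV :=
  fun S => delta (A :|: B :|: C) S - delta (A :|: C) S - delta (B :|: C) S + delta C S.

Definition disjoint_triple (A B C : {set V}) : bool :=
  [&& [disjoint A & B], [disjoint A & C] & [disjoint B & C]].

(* a, b, C index the elementary imsetV u_<{a},{b}|C> *)
Definition elementary_index (a b : V) (C : {set V}) : bool :=
  [&& a != b, a \notin C & b \notin C].

Definition combinatorial (u : imsetV) : Prop :=
  exists k : V -> V -> {set V} -> nat,
    (forall a b C, (0 < k a b C)%N -> elementary_index a b C) /\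
    forall S, u S = \sum_(a : V) \sum_(b : V) \sum_(C : {set V})
                      (k a b C)%:Z * u_triple [set a] [set b] C S.

Definition structural (u : imsetV) : Prop :=
  exists n : nat, (0 < n)%N /\ combinatorial (fun S => n%:Z * u S).

Definition represented (u : imsetV) (A B C : {set V}) : Prop :=
  exists k : nat, combinatorial (fun S => k%:Z * u S - u_triple A B C S).

Definition char_imset (u : imsetV) : imsetV :=
  fun S => 1 - \sum_(T : {set V} | S \subset T) u T.

End Imsets.

(* Main.v *)
Require Import Defs.
From HB Require Import structures.
From mathcomp Require Import all_boot all_order all_algebra.
Import Order.TTheory GRing.Theory Num.Theory.

Module Aux.
Set Implicit Arguments. Unset Strict Implicit. Unset Printing Implicit Defensive.


Section Trips.
Variable T : eqType.

Fixpoint trips (p : seq T) : seq (T * T * T) :=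
  match p with
  | x :: ((y :: z :: _) as t) => (x, y, z) :: trips t
  | _ => [::]
  end.

Definition jn (s : seq T) (w : T) (t : seq T) : seq (T * T * T) :=
  if s is x :: s' then (if t is y :: _ then [:: (last x s', w, y)] else [::]) else [::].

Lemma trips_cat s w t : trips (s ++ w :: t) = trips (rcons s w) ++ jn s w t ++ trips (w :: t).
Proof.
elim: s => [|x s IH] //=.
case: s IH => [|y s] IH /=.
  by case: t {IH}.
move: IH; case: s => [|z s] /= IH; rewrite IH //.
Qed.

Lemma trips_rcons2 s y x : trips (rcons (rcons s y) x) = trips (rcons s y) ++ jn s y [:: x].
Proof.
have -> : rcons (rcons s y) x = s ++ y :: [:: x] by rewrite -cats1 -cats1 -catA.
by rewrite trips_cat /= cats0.
Qed.

Definition flip3 (t : T * T * T) := (t.2, t.1.2, t.1.1).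

Lemma jn_rcons s z y x : jn (rcons s z) y [:: x] = [:: (z, y, x)].
Proof. by case: s => [|u r] //=; rewrite last_rcons. Qed.

Lemma trips_rev p : trips (rev p) = rev (map flip3 (trips p)).
Proof.
elim: p => [|x p IH] //.
rewrite rev_cons.
case: p IH => [|y p] IH //.
rewrite rev_cons trips_rcons2 -rev_cons IH.
case: p {IH} => [|z p]; first by [].
have -> : trips [:: x, y, z & p] = (x,y,z) :: trips (y :: z :: p) by [].
by rewrite map_cons [RHS]rev_cons -[RHS]cats1 rev_cons jn_rcons.
Qed.

Lemma trips_nthP x0 (f : T * T * T -> bool) p :
  (forall i, 0 < i -> i.+1 < size p -> f (nth x0 p i.-1, nth x0 p i, nth x0 p i.+1))
  <-> all f (trips p).
Proof.
elim: p => [|x p IH]; first by split.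
case: p IH => [|y [|z r]] IH.
- by split=> // _ [|[|i]].
- by split=> // _ [|[|i]].
have -> : trips [:: x, y, z & r] = (x,y,z) :: trips (y :: z :: r) by [].
rewrite /=; split.
  move=> H; apply/andP; split; first exact: (H 1).
  apply/IH; move=> [|j] // _ Hj; exact: (H j.+2).
case/andP=> fxyz /IH H [|[|j]] // _ Hj; exact: (H j.+1).
Qed.

Lemma mem_tripsP (t : T * T * T) p :
  t \in trips p -> exists s r, p = s ++ [:: t.1.1, t.1.2, t.2 & r].
Proof.
elim: p => [|x p IH] //.
case: p IH => [|y [|z r]] IH //.
have -> : trips [:: x, y, z & r] = (x,y,z) :: trips (y :: z :: r) by [].
rewrite inE => /orP[/eqP->|/IH[s [r' E]]].
  by exists [::], r.
by exists (x :: s), r'; rewrite E.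
Qed.


Lemma jn_rcons_cons s z y x t : jn (rcons s z) y (x :: t) = [:: (z, y, x)].
Proof. by case: s => [|u r] //=; rewrite last_rcons. Qed.

Definition seqpath (e : rel T) (p : seq T) := if p is x :: q then path e x q else true.

Lemma seqpath_cat e s w t : seqpath e (s ++ w :: t) = seqpath e (rcons s w) && path e w t.
Proof.
case: s => [|x s] //=.
by rewrite cat_path rcons_path /= andbA.
Qed.

Lemma rev_cons_last (a : T) q : rev (a :: q) = last a q :: rev (belast a q).
Proof. by rewrite lastI rev_rcons. Qed.

Lemma last_rev_belast (a : T) q : last (last a q) (rev (belast a q)) = a.
Proof.
have E := rev_cons_last a q; rewrite rev_cons in E.
transitivity (last a (last a q :: rev (belast a q))); first by [].
by rewrite -E last_rcons.
Qed.

Lemma seqpath_rev e (esym : symmetric e) p : seqpath e (rev p) = seqpath e p.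
Proof.
case: p => [|a q] //.
rewrite rev_cons_last /= rev_path.
by apply: eq_path => x y; rewrite esym.
Qed.

Lemma split_last (P : pred T) p : has P p ->
  exists s w t, [/\ p = s ++ w :: t, P w & ~~ has P t].
Proof.
elim: p => [|x p IH] //= /orP[Px|hp].
  case hp: (has P p); last by exists [::], x, p; rewrite hp.
  by case: (IH hp) => s [w [t [E Pw nh]]]; exists (x :: s), w, t; rewrite E.
by case: (IH hp) => s [w [t [E Pw nh]]]; exists (x :: s), w, t; rewrite E.
Qed.

Lemma path_suffix (e : rel T) (x : T) p s w t : x :: p = s ++ w :: t -> path e x p -> path e w t.
Proof.
case: s => [|y s] /=; first by case=> -> ->.
case=> -> ->; rewrite cat_path => /andP[_] /=; by case/andP.
Qed.

Lemma last_eq (x : T) p s w t : x :: p = s ++ w :: t -> last x p = last w t.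
Proof.
case: s => [|y s] /=; first by case=> -> ->.
by case=> -> ->; rewrite last_cat.
Qed.

Lemma trips_mid_in (t : T * T * T) w r : t \in trips (w :: r) -> t.1.2 \in r.
Proof.
case/mem_tripsP=> s [r' E].
case: s E => [|y s] /= E; case: E => _ ->; first by rewrite !inE eqxx.
by rewrite mem_cat !inE eqxx !orbT.
Qed.

Lemma trips_path (e : rel T) (x : T) r (t : T * T * T) : path e x r -> t \in trips (x :: r) ->
  e t.1.1 t.1.2 && e t.1.2 t.2.
Proof.
move=> pr /mem_tripsP[s [r' E]].
have : seqpath e (x :: r) by [].
rewrite E seqpath_cat => /andP[_] /=; by case/and3P=> -> ->.
Qed.

End Trips.

Section Graph.
Variable V : finType.
Variables (d b : rel V).
Hypothesis dirr : irreflexive d.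
Hypothesis bsym : symmetric b.
Hypothesis Hacyc : forall x y, d x y -> ~~ connect d y x.
Hypothesis Hsib : forall v w, b v w -> ~~ connect d w v.

Lemma adj_sym : symmetric (adj d b).
Proof. by move=> x y; rewrite /adj bsym orbCA. Qed.

Lemma d_noback x y : d x y -> ~~ arrowhead d b y x.
Proof.
move=> dxy; rewrite /arrowhead negb_or; apply/andP; split.
  by apply/negP=> dyx; move/negP: (Hacyc dxy); apply; apply: connect1.
by apply/negP=> byx; move/negP: (Hsib byx); apply; apply: connect1.
Qed.

Lemma arrow2_b x y : arrowhead d b x y -> arrowhead d b y x -> b x y.
Proof.
rewrite /arrowhead => /orP[dxy|//] /orP[dyx|byx].
  by move/negP: (Hacyc dxy); case; apply: connect1.
by rewrite bsym.
Qed.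

Lemma connect_antisym x y : connect d x y -> connect d y x -> x = y.
Proof.
case/connectP=> p; case: p => [|z p] /= => [_ -> //|/andP[dxz pz] ->].
move=> Hyx; move/negP: (Hacyc dxz); case.
apply: connect_trans Hyx; apply/connectP; by exists p.
Qed.

Definition desc (x : V) : {set V} := [set y | connect d x y].

Lemma sink_exists (X : {set V}) x : x \in X ->
  exists2 w, w \in X & (connect d x w /\ forall w', w' \in X -> connect d w w' -> w' = w).
Proof.
move=> xX.
pose P := fun w => (w \in X) && connect d x w.
have Px : P x by rewrite /P xX connect0.
case: (arg_minnP (fun w => #|desc w|) Px) => w /andP[wX xw] Hmin.
exists w => //; split=> // w' w'X ww'.
have Pw' : P w' by rewrite /P w'X (connect_trans xw ww').
have := Hmin _ Pw'.
case: (eqVneq w' w) => // ne.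
have sub : desc w' \proper desc w.
  rewrite properEneq; apply/andP; split.
    apply/eqP=> E; have : w \in desc w' by rewrite E inE connect0.
    rewrite inE => w'w; by move: ne; rewrite (connect_antisym ww' w'w) eqxx.
  apply/subsetP=> z; rewrite !inE => w'z; exact: connect_trans ww' w'z.
by rewrite leqNgt (proper_card sub).
Qed.

Definition cnd (K C : {set V}) (t : V * V * V) : bool :=
  if arrowhead d b t.1.1 t.1.2 && arrowhead d b t.2 t.1.2 then t.1.2 \in K else t.1.2 \notin C.
Definition bad (C : {set V}) (t : V * V * V) : bool :=
  [&& arrowhead d b t.1.1 t.1.2, arrowhead d b t.2 t.1.2 & t.1.2 \notin anc d C].
Definition noncol (C : {set V}) (t : V * V * V) : bool :=
  ~~ (arrowhead d b t.1.1 t.1.2 && arrowhead d b t.2 t.1.2) && (t.1.2 \notin C).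
Definition gps (K C : {set V}) (p : seq V) : bool :=
  [&& uniq p, seqpath (adj d b) p & all (cnd K C) (trips p)].

Lemma noncol_cnd K C t : noncol C t -> cnd K C t.
Proof. by rewrite /noncol /cnd => /andP[/negbTE -> ->]. Qed.

Lemma noncol_bad C t : noncol C t -> ~~ bad C t.
Proof. by rewrite /noncol /bad => /andP[]; case: (arrowhead _ _ _) => //=; case: (arrowhead _ _ _). Qed.

Lemma mconnP C a q : mconnecting d b C a q <-> gps (anc d C) C (a :: q).
Proof.
rewrite /mconnecting /gps; split.
  case=> U A T; apply/and3P; split; first exact: U.
    by apply/(pathP a) => i Hi; exact: (A i).
  by apply/(@trips_nthP _ a (cnd (anc d C) C)) => i Hi Hi'; move: (T i Hi Hi'); rewrite /cnd.
case/and3P=> U A T.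
move/(pathP a): A => A; move/(@trips_nthP _ a (cnd (anc d C) C)): T => T; split => //.
Qed.

Lemma cnd_flip K C t : cnd K C (flip3 t) = cnd K C t.
Proof. by rewrite /cnd /= andbC. Qed.

Lemma bad_flip C t : bad C (flip3 t) = bad C t.
Proof. by rewrite /bad /= andbCA andbA. Qed.

Lemma gps_rev K C p : gps K C (rev p) = gps K C p.
Proof.
rewrite /gps rev_uniq seqpath_rev; last exact: adj_sym.
by rewrite trips_rev all_rev all_map; congr [&& _, _ & _]; apply: eq_all => t; rewrite /= cnd_flip.
Qed.

Lemma count_bad_rev C p : count (bad C) (trips (rev p)) = count (bad C) (trips p).
Proof.
by rewrite trips_rev count_rev count_map; apply: eq_count => t; rewrite /= bad_flip.
Qed.

Lemma uniq_mid (a : V) q s x v r : uniq (a :: q) -> a :: q = s ++ x :: v :: r -> v != a.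
Proof.
move=> U E; apply/negP=> /eqP va; move: U E; rewrite va => U.
case: s => [|y s] [_ Eq]; move: U; rewrite /= Eq ?mem_cat !inE eqxx ?orbT //.
Qed.

Lemma anc_in (C : {set V}) x y : connect d x y -> y \in C -> x \in anc d C.
Proof. by move=> xy yC; rewrite inE; apply/existsP; exists y; rewrite yC. Qed.

Lemma ancP (C : {set V}) x : reflect (exists2 y, y \in C & connect d x y) (x \in anc d C).
Proof.
rewrite inE; apply: (iffP existsP) => [[y /andP[yC xy]]|[y yC xy]]; first by exists y.
by exists y; rewrite yC.
Qed.

Lemma count0 (P : pred (V * V * V)) l : (forall t, t \in l -> ~~ P t) -> count P l = 0.
Proof. by move=> H; apply/eqP; rewrite eqn0Ngt -has_count; apply/hasPn. Qed.

Lemma reroute K C a q x v z :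
  gps K C (a :: q) -> (x, v, z) \in trips (a :: q) -> bad C (x, v, z) -> connect d v a ->
  exists q', [/\ last a q' = last a q, gps K C (a :: q') &
     count (bad C) (trips (a :: q')) < count (bad C) (trips (a :: q))].
Proof.
move=> G0; have /and3P[U P T] := G0.
move=> vt bv va.
have vnC : v \notin anc d C by case/and3P: bv.
have [s0 [r0 E0]] := mem_tripsP vt; rewrite /= in E0.
have vna : v != a := uniq_mid U E0.
have vin : v \in a :: q by rewrite E0 mem_cat !inE eqxx !orbT.
case/connectP: va => pth pp la.
case: (shortenP pp) la => pd ppd upd _ lpd; move: lpd => /esym lpd.
have Ddesc : forall y, y \in v :: pd -> connect d v y := path_connect ppd.
have DnC : forall y, y \in v :: pd -> y \notin C.
  move=> y /Ddesc vy; apply/negP=> yC; move/negP: vnC; apply; exact: anc_in vy yC.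
have hp : has (mem (v :: pd)) (a :: q) by apply/hasP; exists v => //; exact: mem_head.
case: (split_last hp) => s [w [t [E wD nt]]].
have wD' : w \in v :: pd := wD.
have vt' : v \notin t by apply/negP=> vt'; move/hasP: nt; apply; exists v => //; exact: mem_head.
have U' : uniq (s ++ w :: t) by rewrite -E.
have snil : s != [::].
  apply/negP=> /eqP sn; move: E; rewrite sn /= => -[aw tq].
  by move: vin vt' vna; rewrite tq inE aw => /orP[->|->].
have wna : w != a.
  case: s E snil U' => [|y s] // [-> _] _; rewrite cat_uniq => /and3P[_ /hasPn H _].
  by apply/negP=> /eqP wy; move: (H w); rewrite inE eqxx wy inE eqxx => /(_ isT).
have hw : has (pred1 w) (v :: pd) by apply/hasP; exists w => //=.
case: (split_last hw) => s2 [w' [D2 [ED /eqP ww' _]]]; subst w'.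
have pD2 : path d w D2 := path_suffix ED ppd.
have lD2 : last w D2 = a by rewrite -(last_eq ED) lpd.
have uD2 : uniq (w :: D2) by move: upd; rewrite ED cat_uniq => /and3P[_ _ ->].
have D2sub : forall y, y \in D2 -> y \in v :: pd by move=> y yD; rewrite ED mem_cat inE yD !orbT.
case: D2 {ED} pD2 lD2 uD2 D2sub => [|y1 D2'] pD2 lD2 uD2 D2sub.
  by move: wna; rewrite -lD2 eqxx.
set D2 := y1 :: D2' in pD2 lD2 uD2 D2sub *.
have Enew : a :: (rev (belast w D2) ++ t) = rev D2 ++ w :: t.
  by rewrite -cat_cons -lD2 -rev_cons_last rev_cons cat_rcons.
have E' : s ++ w :: t = a :: q by [].
have NC : all (noncol C) (trips (rcons (rev D2) w) ++ jn (rev D2) w t).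
  rewrite all_cat; apply/andP; split.
    rewrite -rev_cons trips_rev all_rev all_map; apply/allP => t0 Ht0.
    have /andP[_ dt] := trips_path pD2 Ht0.
    rewrite /noncol /= negb_and (negbTE (d_noback dt)) /=.
    by apply: DnC; apply: D2sub; exact: trips_mid_in Ht0.
  rewrite /D2 rev_cons; case: t {nt vt' E U' E' Enew} => [|y t].
    by case: (rcons (rev D2') y1).
  rewrite jn_rcons_cons /= andbT /noncol /=.
  move: pD2; rewrite /D2 /= => /andP[dwy _].
  by rewrite negb_and (negbTE (d_noback dwy)) /= DnC.
exists (rev (belast w D2) ++ t); split.
- by rewrite (last_eq Enew) (last_eq (esym E')).
- rewrite /gps Enew; apply/and3P; split.
  + have wD2 : w \notin D2 by case/andP: uD2.
    have uD2' : uniq D2 by case/andP: uD2.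
    have /and3P[_ _ uwt] : [&& uniq s, ~~ has (mem s) (w :: t) & uniq (w :: t)] by rewrite -cat_uniq.
    rewrite cat_uniq rev_uniq uD2' uwt andbT /= negb_or mem_rev wD2 /=.
    apply/hasPn => y yt; rewrite mem_rev.
    apply/negP=> yD; move/hasP: nt; apply; exists y => //; exact: D2sub.
  + rewrite seqpath_cat; apply/andP; split.
      rewrite -rev_cons seqpath_rev; last exact: adj_sym.
      by apply: sub_path pD2 => u u' duu; rewrite /adj duu.
    by move: P; rewrite -E' seqpath_cat => /andP[_ ->].
  + rewrite trips_cat catA all_cat; apply/andP; split.
      by apply/allP => t0 /(allP NC) /noncol_cnd.
    by move: T; rewrite -E' trips_cat !all_cat => /and3P[_ _ ->].
- rewrite Enew trips_cat catA count_cat (count0 (l := _ ++ _)); last first.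
    by move=> t0 /(allP NC) /noncol_bad.
  rewrite -E' trips_cat catA count_cat add0n -addn1 addnC leq_add2r.
  rewrite -has_count; apply/hasP; exists (x, v, z) => //.
  move: vt; rewrite -E' trips_cat catA mem_cat => /orP[//|] /trips_mid_in /=.
  by rewrite (negbTE vt').
Qed.

Lemma nobad K C p : count (bad C) (trips p) = 0 -> gps K C p -> gps (anc d C) C p.
Proof.
move=> c0 /and3P[U P T]; rewrite /gps U P /=.
have nb : ~~ has (bad C) (trips p) by rewrite has_count c0.
apply/allP => t tin; move: (allP T t tin) (hasPn nb t tin).
rewrite /cnd /bad; case: ifP => [/andP[-> ->]|_] //= _.
by rewrite negbK.
Qed.

Lemma pseudo_mconn C : forall n a q, count (bad C) (trips (a :: q)) <= n ->
  gps (anc d (C :|: [set a; last a q])) C (a :: q) ->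
  exists q', last a q' = last a q /\ gps (anc d C) C (a :: q').
Proof.
elim=> [|n IH] a q Hn G0.
  by exists q; split => //; apply: nobad G0; apply/eqP; rewrite -leqn0.
case: (posnP (count (bad C) (trips (a :: q)))) => [c0|cpos].
  by exists q; split => //; apply: nobad G0.
move: cpos; rewrite -has_count => /hasP[[[x v] z] vt bv].
have vnC : v \notin anc d C by case/and3P: bv.
have /and3P[_ _ T] := G0.
have := allP T _ vt; rewrite /cnd; have /and3P[-> -> _] := bv; move=> /= /ancP[y].
rewrite !inE => /orP[yC vy|/orP[/eqP ya|/eqP yl] vy].
- by move/negP: vnC; case; exact: anc_in vy yC.
- subst y; case: (reroute G0 vt bv vy) => q' [lq' G' cq'].
  case: (IH a q'); first by rewrite -ltnS (leq_trans cq' Hn).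
    by rewrite lq'.
  by move=> q3 [lq3 G3]; exists q3; rewrite lq3 lq'.
- subst y; set l := last a q in G0 vy *.
  have Gr : gps (anc d (C :|: [set a; l])) C (l :: rev (belast a q)).
    by rewrite -rev_cons_last gps_rev.
  have vtr : (z, v, x) \in trips (l :: rev (belast a q)).
    by rewrite /l -rev_cons_last trips_rev mem_rev; apply/mapP; exists (x, v, z).
  have bvr : bad C (z, v, x) by rewrite -bad_flip.
  case: (reroute Gr vtr bvr vy) => q' [lq' G' cq'].
  rewrite last_rev_belast in lq'.
  case: (IH l q').
  - rewrite -ltnS; apply: leq_trans cq' _.
    by rewrite /l -rev_cons_last count_bad_rev.
  - by rewrite lq' (setUC [set l]).
  move=> q3 [lq3 G3]; exists (rev (belast l q3)); split.
    by have := last_rev_belast l q3; rewrite lq3 lq'.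
  have la : last l q3 = a by rewrite lq3 lq'.
  by rewrite -{1}la -rev_cons_last gps_rev.
Qed.

Lemma pseudo_not_msep C a q : gps (anc d (C :|: [set a; last a q])) C (a :: q) ->
  ~ msep d b [set a] [set last a q] C.
Proof.
move=> G0 Hs.
case: (pseudo_mconn (leqnn _) G0) => q' [lq' G'].
apply: (Hs a (last a q) q'); rewrite ?inE ?eqxx //.
exact/mconnP.
Qed.

Definition ee (D : {set V}) x y :=
  [&& adj d b x y, (y \in D) ==> arrowhead d b x y & (x \in D) ==> arrowhead d b y x].
Definition Pp (D : {set V}) a bb q :=
  [&& last a q == bb, uniq (a :: q), path (ee D) a q &
      all (fun y => [|| y \in D, y == a | y == bb]) (a :: q)].

Lemma ee_sym D : symmetric (ee D).
Proof. by move=> x y; rewrite /ee adj_sym; case: (adj d b y x) => //=; rewrite andbC. Qed.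

Lemma Pp_rev D a bb q : Pp D a bb q -> Pp D bb a (rev (belast a q)).
Proof.
case/and4P=> /eqP lq U P A; apply/and4P; split.
- by rewrite -{1}lq last_rev_belast.
- by rewrite -lq -rev_cons_last rev_uniq.
- have := seqpath_rev (@ee_sym D) (a :: q); rewrite rev_cons_last lq /= => ->; exact: P.
- rewrite -lq -rev_cons_last all_rev lq; apply: sub_all A => y /=.
  by case: (y \in D) => //=; rewrite orbC.
Qed.

Lemma uniq_mid_last (a : V) q s x y z r : uniq (a :: q) -> a :: q = s ++ [:: x, y, z & r] ->
  y != last a q.
Proof.
move=> U E; rewrite (last_eq E) /=; apply/negP=> /eqP yl.
move: U; rewrite E cat_uniq => /and3P[_ _]; rewrite [uniq _]/= => /and3P[_ + _].
by rewrite yl mem_last.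
Qed.

Lemma Pp_gps (D K C : {set V}) a bb q : D \subset K -> Pp D a bb q -> gps K C (a :: q).
Proof.
move=> DK /and4P[/eqP lq U P A]; apply/and3P; split => //.
  by apply: sub_path P => x y /and3P[].
apply/allP=> [[[x y] z]] t.
have [s [r E]] := mem_tripsP t; rewrite /= in E.
have yD : y \in D.
  have := allP A y; rewrite E mem_cat !inE eqxx !orbT => /(_ isT).
  rewrite (negbTE (uniq_mid U E)) -lq (negbTE (uniq_mid_last U E)) !orbF //.
have := trips_path P t => /andP[/and3P[_ H1 _] /and3P[_ _ H2]].
rewrite /cnd /= (implyP H1 yD) (implyP H2 yD) /=.
exact: (subsetP DK).
Qed.

Lemma brel_sym (W : {set V}) : symmetric (brel_in b W).
Proof. by move=> x y; rewrite /brel_in bsym andbCA. Qed.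

Lemma brel_closed (W : {set V}) x y : connect (brel_in b W) x y -> x \in W -> y \in W.
Proof.
case/connectP=> p pp ->; elim: p x pp => //= z p IH x /andP[/and3P[_ zW _] pp] _.
exact: IH pp zW.
Qed.

Lemma dis_headP (H : {set V}) x :
  reflect (exists2 h, h \in H & (x \in anc d H) && connect (brel_in b (anc d H)) h x)
          (x \in dis_head d b H).
Proof.
rewrite /dis_head; apply: (iffP bigcupP) => [[h hH xh]|[h hH xh]].
  by exists h; rewrite // inE in xh.
by exists h; rewrite // inE.
Qed.

Lemma H_anc (H : {set V}) h : h \in H -> h \in anc d H.
Proof. by move=> hH; apply: anc_in hH; exact: connect0. Qed.

Lemma H_dis (H : {set V}) h : h \in H -> h \in dis_head d b H.
Proof. by move=> hH; apply/dis_headP; exists h; rewrite // H_anc // connect0. Qed.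

Lemma dis_anc (H : {set V}) x : x \in dis_head d b H -> x \in anc d H.
Proof. by case/dis_headP=> h _ /andP[]. Qed.

Lemma dis_conn (H : {set V}) x y : is_head d b H ->
  x \in dis_head d b H -> y \in dis_head d b H -> connect (brel_in b (anc d H)) x y.
Proof.
case=> _ _ Hc /dis_headP[h1 h1H /andP[_ c1]] /dis_headP[h2 h2H /andP[_ c2]].
have cs := sym_connect_sym (brel_sym (anc d H)).
apply: connect_trans c2; apply: connect_trans (Hc _ _ h1H h2H).
by rewrite cs.
Qed.

Lemma dis_closed (H : {set V}) x y : x \in dis_head d b H ->
  connect (brel_in b (anc d H)) x y -> y \in dis_head d b H.
Proof.
move=> /dis_headP[h hH /andP[xA hx]] xy; apply/dis_headP; exists h => //.
by rewrite (brel_closed xy xA) (connect_trans hx xy).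
Qed.

Lemma bpath (H : {set V}) x y : is_head d b H ->
  x \in dis_head d b H -> y \in dis_head d b H ->
  exists r, [/\ last x r = y, uniq (x :: r), path (brel_in b (anc d H)) x r &
                forall z, z \in x :: r -> z \in dis_head d b H].
Proof.
move=> hH xD yD; case/connectP: (dis_conn hH xD yD) => p pp ly.
case: (shortenP pp) ly => r pr ur _ lr; exists r; split => //.
by move=> z /(path_connect pr) xz; exact: dis_closed xD xz.
Qed.

Lemma brel_ee (H : {set V}) D x y : brel_in b (anc d H) x y -> ee D x y.
Proof.
case/and3P=> _ _ bxy; rewrite /ee /adj /arrowhead bxy (bsym y x) bxy !orbT.
by rewrite !implybT.
Qed.

Definition entry (D : {set V}) a := (a \in D) \/ (a \notin D /\ exists2 x, x \in D & d a x).

Lemma buildPD (H : {set V}) a bb x : is_head d b H -> a \notin dis_head d b H ->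
  x \in dis_head d b H -> d a x -> bb \in dis_head d b H ->
  exists q, Pp (dis_head d b H) a bb q.
Proof.
move=> hH aD xD ax bD.
case: (bpath hH xD bD) => r [lr ur pr Dr].
exists (x :: r); apply/and4P; split.
- by rewrite /= lr.
- rewrite cons_uniq ur andbT; apply/negP=> /Dr; by rewrite (negbTE aD).
- rewrite /= (sub_path (@brel_ee H _) pr) andbT /ee /adj /arrowhead ax xD (negbTE aD) /=.
  by [].
- apply/allP=> z; rewrite inE => /orP[/eqP->|/Dr->//]; by rewrite eqxx !orbT.
Qed.

Lemma buildA (H : {set V}) a bb : is_head d b H -> a != bb ->
  entry (dis_head d b H) a -> entry (dis_head d b H) bb ->
  exists q, Pp (dis_head d b H) a bb q.
Proof.
move=> hH ab [aD|[aD [x xD ax]]] [bD|[bD [y yD by']]].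
- case: (bpath hH aD bD) => r [lr ur pr Dr].
  exists r; apply/and4P; split => //; first by rewrite lr.
    by rewrite (sub_path (@brel_ee H _) pr).
  by apply/allP=> z /Dr ->.
- case: (buildPD hH bD yD by' aD) => q Pq.
  by exists (rev (belast bb q)); exact: Pp_rev.
- exact: (buildPD hH aD xD ax bD).
- case: (bpath hH xD yD) => r [lr ur pr Dr].
  exists (x :: rcons r bb); apply/and4P; split => //=.
  + by rewrite last_rcons.
    have anr : a \notin x :: r by apply/negP=> /Dr; rewrite (negbTE aD).
    have bnr : bb \notin x :: r by apply/negP=> /Dr; rewrite (negbTE bD).
    have /andP[xr ur'] : (x \notin r) && uniq r by exact: ur.
    move: anr bnr; rewrite !inE !negb_or => /andP[ax' ar] /andP[bx br].
    rewrite -cats1 mem_cat cat_uniq !inE negb_or ax' ar ab mem_cat inE negb_or xr ur' /=.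
    by rewrite orbF eq_sym bx br.
  + rewrite rcons_path (sub_path (@brel_ee H _) pr) lr /ee /adj /arrowhead ax xD (negbTE aD).
    by rewrite by' yD (negbTE bD) !orbT.
  + rewrite eqxx orbT andTb xD andTb all_rcons eqxx !orbT andTb.
    by apply/allP=> z zr; rewrite Dr // inE zr orbT.
Qed.

Lemma headA (H A S C : {set V}) a bb : is_head d b H -> A \subset tail d b H ->
  S = H :|: A -> a \in S -> bb \in S -> a != bb -> S \subset a |: (bb |: C) ->
  ~ msep d b [set a] [set bb] C.
Proof.
move=> hH At ES aS bS ab SC.
have ent : forall s, s \in S -> entry (dis_head d b H) s.
  move=> s; rewrite ES inE => /orP[sH|/(subsetP At)].
    by left; exact: H_dis.
  rewrite !inE => /orP[/andP[_ sD]|/existsP[x /andP[xD sx]]]; first by left.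
  case sD: (s \in dis_head d b H); [by left | right; split; [by rewrite sD | by exists x]].
case: (buildA hH ab (ent _ aS) (ent _ bS)) => q Pq.
have lq : last a q = bb by case/and4P: Pq => /eqP.
rewrite -lq; apply: pseudo_not_msep.
apply: Pp_gps Pq; apply/subsetP => x /dis_anc /ancP[h hH' xh].
apply/ancP; exists h => //; move: (subsetP SC h); rewrite ES inE hH' lq => /(_ isT).
by rewrite !inE; case/or3P=> ->; rewrite ?orbT.
Qed.

Lemma sep_path (A : {set V}) x y q :
  (forall u w, connect d u w -> w \in A -> u \in A) ->
  x \in A -> y \in A ->
  (forall w, w \in A -> ~~ d y w) ->
  mconnecting d b (A :\: [set x; y]) x q -> last x q = y ->
  [/\ forall i, i < size (x :: q) -> nth x (x :: q) i \in A,
      forall i, 0 < i -> i < size q ->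
        arrowhead d b (nth x (x :: q) i.+1) (nth x (x :: q) i) &
      forall i, i < size q -> arrowhead d b (nth x (x :: q) i) (nth x (x :: q) i.+1)].
Proof.
move=> Aanc xA yA ych [U Adj T] lq.
set p := x :: q.
have py : nth x p (size q) = y by rewrite -lq -[last x q]/(last x p) -nth_last.
have ancC : forall w, w \in anc d (A :\: [set x; y]) -> w \in A.
  move=> w /ancP[h]; rewrite in_setD => /andP[_ hA] wh; exact: Aanc wh hA.
have allA : forall i, i < size p -> nth x p i \in A.
  suff H : forall z, z \in p -> z \in A by move=> i Hi; apply: H; exact: mem_nth.
  move=> z zp; apply/negPn/negP => zA.
  have zX : z \in [set u | (u \in p) && (u \notin A)] by rewrite inE zp zA.
  case: (sink_exists zX) => w; rewrite inE => /andP[wp wA] [_ wmax].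
  pose i := index w p.
  have ip : i < size p by rewrite index_mem.
  have pi : nth x p i = w by exact: nth_index.
  have i0 : 0 < i.
    rewrite lt0n; apply/negP => /eqP i0; move: pi; rewrite i0 /= => wx.
    by move: wA; rewrite -wx xA.
  have iS : i.+1 < size p.
    rewrite ltn_neqAle ip andbT; apply/negP=> /eqP iq; move: pi.
    move: iq => [iq]; rewrite iq py => yw; by move: wA; rewrite -yw yA.
  have hchild : exists n, (n \in p) && d w n.
    have := T i i0 iS; rewrite pi.
    case: ifP => [col /ancC|col _]; first by rewrite (negbTE wA).
    have a1 := Adj i.-1; rewrite (prednK i0) in a1; have {a1} a1 := a1 ip.
    have a2 := Adj i iS.
    move: col a1 a2; rewrite pi /arrowhead /adj.
    set pm := nth x p i.-1; set pn := nth x p i.+1.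
    have pmp : pm \in p by apply: mem_nth; rewrite (leq_ltn_trans (leq_pred i) ip).
    have pnp : pn \in p by exact: mem_nth.
    move=> cl a1 a2.
    have [dpm|ndpm] := boolP (d w pm); first by exists pm; rewrite pmp.
    have ahm : d pm w || b pm w by move: a1; rewrite (negbTE ndpm) /=.
    rewrite ahm /= in cl.
    exists pn; rewrite pnp /=; move: a2 cl; rewrite (bsym w pn).
    by case: (d w pn) => //=; case: (d pn w) => //=; case: (b pn w).
  case: hchild => n /andP[np dwn].
  have nA : n \notin A.
    by apply/negP => nA; move: wA; rewrite (Aanc _ _ (connect1 dwn) nA).
  have := wmax n; rewrite inE np nA => /(_ isT (connect1 dwn)) nw.
  by move: dwn; rewrite nw dirr.
have col : forall i, 0 < i -> i.+1 < size p ->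
    arrowhead d b (nth x p i.-1) (nth x p i) && arrowhead d b (nth x p i.+1) (nth x p i).
  move=> i i0 iS; have := T i i0 iS; case: ifP => // _.
  rewrite in_setD in_set2 allA ?andbT ?negbK; last exact: ltnW iS.
  have h0 := nth_uniq x (s := p) (i := i) (j := 0) (ltnW iS) isT U.
  change (nth x p 0) with x in h0.
  have hy := nth_uniq x (s := p) (i := i) (j := size q) (ltnW iS) (ltnSn _) U.
  rewrite py in hy; rewrite h0 hy.
  by case/orP=> /eqP ie; [move: i0 | move: iS]; rewrite ie ?ltnn.
split => //.
  by move=> i i0 iq; case/andP: (col i i0 iq).
move=> i iq.
case: (ltnP i.+1 (size q)) => [iq'|qi].
  by case/andP: (col i.+1 isT iq').
have ei : i.+1 = size q by apply/eqP; rewrite eqn_leq qi iq.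
rewrite ei py; have := Adj i iq; rewrite ei py /arrowhead /adj.
by rewrite (negbTE (ych _ (allA i (ltnW iq)))) /= bsym.
Qed.

Lemma barren_sub (S : {set V}) : barren d S \subset S.
Proof. by apply/subsetP=> w; rewrite inE => /andP[]. Qed.

Lemma barren_desc (S : {set V}) s : s \in S -> exists2 h, h \in barren d S & connect d s h.
Proof.
move=> sS; case: (sink_exists sS) => w wS [sw wmax]; exists w => //.
rewrite inE wS /=; apply/forallP=> w'; apply/implyP=> w'S; apply/implyP=> ww'.
by rewrite (wmax _ w'S ww').
Qed.

Lemma barren_idem (S : {set V}) : barren d (barren d S) = barren d S.
Proof.
apply/setP=> w; rewrite [in LHS]inE; apply/andP/idP => [[]//|wS]; split => //.
move: wS; rewrite inE => /andP[_ /forallP H]; apply/forallP=> w'; apply/implyP=> w'S.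
by move: (H w'); rewrite (subsetP (barren_sub S) _ w'S).
Qed.

Lemma anc_closed (H : {set V}) u w : connect d u w -> w \in anc d H -> u \in anc d H.
Proof. by move=> uw /ancP[h hH wh]; apply/ancP; exists h => //; exact: connect_trans uw wh. Qed.

Lemma childless (H : {set V}) h w : barren d H = H -> h \in H -> w \in anc d H -> ~~ d h w.
Proof.
move=> bH hH /ancP[h' h'H wh']; apply/negP=> dhw.
move: hH; rewrite -bH inE => /andP[_ /forallP/(_ h')]; rewrite h'H /=.
rewrite (connect_trans (connect1 dhw) wh') => /eqP e; subst h'.
by move/negP: (Hacyc dhw).
Qed.

Lemma tailconn (A : {set V}) x y z q' :
  (forall u w, connect d u w -> w \in A -> u \in A) ->
  x \in A -> y \in A -> (forall w, w \in A -> ~~ d y w) ->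
  mconnecting d b (A :\: [set x; y]) x (z :: q') -> last x (z :: q') = y ->
  [/\ connect (brel_in b A) z y, arrowhead d b x z, z \in A & adj d b x z].
Proof.
move=> Aanc xA yA ych mc lq.
have [U Adj _] := mc.
case: (sep_path Aanc xA yA ych mc lq) => allA ahR ahL.
split.
- rewrite -lq /=; apply: (path_connect (p := q')); last exact: mem_last.
  apply/(pathP x) => i iq.
  have h1 : 0 < i.+1 by [].
  have h2 : i.+1 < size (z :: q') by [].
  have bb' := arrow2_b (ahL i.+1 h2) (ahR i.+1 h1 h2).
  have a1 : nth x (z :: q') i \in A by apply: (allA i.+1); rewrite /= ltnS ltnW.
  have a2 : nth x q' i \in A by apply: (allA i.+2).
  by rewrite /brel_in a1 a2.
- exact: (ahL 0).
- exact: (allA 1).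
- exact: (Adj 0).
Qed.

Lemma caseB1 (H : {set V}) h1 h2 : barren d H = H -> h1 \in H -> h2 \in H ->
  ~~ connect (brel_in b (anc d H)) h1 h2 ->
  msep d b [set h1] [set h2] (anc d H :\: [set h1; h2]).
Proof.
move=> bH h1H h2H nc a' bb' q; rewrite !inE => /eqP-> /eqP-> lq mc.
case: q lq mc => [|z q'] lq mc.
  by move: nc; rewrite /= in lq; rewrite lq connect0.
have Aanc := @anc_closed H.
case: (tailconn Aanc (H_anc h1H) (H_anc h2H) (fun w => childless bH h2H) mc lq)
  => zh2 ah1z zA adj1.
have ahz1 : arrowhead d b z h1.
  move: adj1; rewrite /adj /arrowhead (negbTE (childless bH h1H zA)) /=.
  by rewrite bsym.
have bz := arrow2_b ah1z ahz1.
move/negP: nc; apply; apply: connect_trans zh2; apply: connect1.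
by rewrite /brel_in H_anc // zA bz.
Qed.

Lemma caseB2 (H : {set V}) s h : is_head d b H -> s \in anc d H -> s \notin H ->
  s \notin tail d b H -> h \in H ->
  msep d b [set s] [set h] (anc d H :\: [set s; h]).
Proof.
move=> hH sA sH st hH' a' bb' q; rewrite !inE => /eqP-> /eqP-> lq mc.
have bH : barren d H = H by case: hH.
case: q lq mc => [|z q'] lq mc.
  by move: sH; rewrite /= in lq; rewrite lq hH'.
have Aanc := @anc_closed H.
case: (tailconn Aanc sA (H_anc hH') (fun w => childless bH hH') mc lq)
  => zh ahsz zA _.
have cs := sym_connect_sym (brel_sym (anc d H)).
have zD : z \in dis_head d b H.
  by apply/dis_headP; exists h => //; rewrite zA /= cs.
move/negP: st; apply; rewrite /tail !inE.
move: ahsz; rewrite /arrowhead => /orP[dsz|bsz].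
  by apply/orP; right; apply/existsP; exists z; rewrite zD.
apply/orP; left; rewrite sH /=.
apply: (dis_closed zD); apply: connect1.
by rewrite /brel_in zA sA bsym.
Qed.

Lemma cover2 (S A : {set V}) x y : S \subset A -> S \subset x |: (y |: (A :\: [set x; y])).
Proof.
move/subsetP=> SA; apply/subsetP=> t tS; rewrite !inE SA // andbT.
by case: (t == x); case: (t == y).
Qed.

Lemma lemB (S : {set V}) : S != set0 -> ~ in_SG d b S ->
  exists a bb (C : {set V}), [/\ a != bb, a \in S, bb \in S, a \notin C & bb \notin C] /\
    S \subset a |: (bb |: C) /\ msep d b [set a] [set bb] C.
Proof.
move=> Sn nS.
set H := barren d S.
have HS : H \subset S := barren_sub S.
have SA : S \subset anc d H.
  by apply/subsetP=> s sS; case: (barren_desc sS) => h hH sh; exact: anc_in sh hH.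
have bH : barren d H = H := barren_idem S.
have Hn : H != set0.
  case/set0Pn: Sn => s sS; case: (barren_desc sS) => h hH _.
  by apply/set0Pn; exists h.
have notin2 : forall x y, x \notin anc d H :\: [set x; y] /\ y \notin anc d H :\: [set x; y].
  by move=> x y; rewrite !inE !eqxx /= orbT.
case: (boolP [forall h1 in H, forall h2 in H, connect (brel_in b (anc d H)) h1 h2]) => [Hc|].
  have hH : is_head d b H.
    split => // h1 h2 h1H h2H.
    by move/forallP: Hc => /(_ h1); rewrite h1H /= => /forallP/(_ h2); rewrite h2H.
  have : ~~ (S :\: H \subset tail d b H).
    apply/negP=> sub; apply: nS; exists H, (S :\: H); split => //.
    by rewrite -{1}(setID S H) (setIidPr HS).
  case/subsetPn=> s; rewrite inE => /andP[sH sS] st.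
  case/set0Pn: Hn => h hH'.
  exists s, h, (anc d H :\: [set s; h]); split; last split.
  - have [n1 n2] := notin2 s h.
    split => //; last exact: (subsetP HS).
    by apply/negP=> /eqP e; move: sH; rewrite e hH'.
  - exact: cover2.
  - exact: caseB2 hH (subsetP SA _ sS) sH st hH'.
case/forallPn=> h1; rewrite negb_imply => /andP[h1H] /forallPn[h2].
rewrite negb_imply => /andP[h2H nc].
exists h1, h2, (anc d H :\: [set h1; h2]); split; last split.
- have [n1 n2] := notin2 h1 h2.
  split => //; try exact: (subsetP HS).
  by apply/negP=> /eqP e; move: nc; rewrite e connect0.
- exact: cover2.
- exact: caseB1.
Qed.

End Graph.


Section Imset.
Variable V : finType.
Local Open Scope ring_scope.

Definition mu (u : imsetV V) (S : {set V}) : int := \sum_(T : {set V} | S \subset T) u T.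

Lemma mu_delta (X S : {set V}) : \sum_(T : {set V} | S \subset T) delta X T = (S \subset X)%:Z.
Proof.
rewrite /delta big_mkcond (bigD1 X) //= eqxx big1 ?addr0; first by case: (S \subset X).
by move=> T /negbTE ->; case: (S \subset T).
Qed.

Lemma sub_nin (x : V) (S X : {set V}) : x \notin S -> (S \subset x |: X) = (S \subset X).
Proof.
move=> xS; apply/subsetP/subsetP => H t tS; move: (H t tS); rewrite ?inE.
  by case/orP=> // /eqP e; move: xS; rewrite -e tS.
by move=> ->; rewrite orbT.
Qed.

Lemma sub_in (x : V) (S X : {set V}) : x \in S -> x \notin X -> (S \subset X) = false.
Proof. by move=> xS xX; apply/negP=> /subsetP/(_ x xS); rewrite (negbTE xX). Qed.

Definition ind (a b : V) (C S : {set V}) : bool := [&& a \in S, b \in S & S \subset a |: (b |: C)].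

Lemma mu_triple (a b : V) (C S : {set V}) : elementary_index a b C ->
  mu (u_triple [set a] [set b] C) S = (ind a b C S)%:Z.
Proof.
case/and3P=> ab aC bC.
rewrite /mu /u_triple big_split /= !sumrB !mu_delta -setUA.
rewrite /ind; case: (boolP (a \in S)) => aS /=.
- have -> : (S \subset b |: C) = false.
    by rewrite (sub_in aS) // !inE negb_or (negbTE ab) aC.
  rewrite (sub_in aS aC).
  case: (boolP (b \in S)) => bS /=.
  + by rewrite (@sub_in b S (a |: C) bS) ?subr0 ?addr0 // !inE negb_or (negbTE bC) eq_sym (negbTE ab).
  + by rewrite [a |: (b |: C)]setUCA (sub_nin _ bS) subrr.
- rewrite !(sub_nin _ aS).
  by case: (S \subset b |: C); case: (S \subset C).
Qed.

Lemma mu_comb (w : imsetV V) (k : V -> V -> {set V} -> nat) S :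
  (forall a b C, (0 < k a b C)%N -> elementary_index a b C) ->
  (forall S, w S = \sum_(a : V) \sum_(b : V) \sum_(C : {set V})
                      (k a b C)%:Z * u_triple [set a] [set b] C S) ->
  mu w S = \sum_(a : V) \sum_(b : V) \sum_(C : {set V}) (k a b C)%:Z * (ind a b C S)%:Z.
Proof.
move=> Hk Hw; rewrite /mu (eq_bigr _ (fun T _ => Hw T)).
rewrite exchange_big; apply: eq_bigr => a _.
rewrite exchange_big; apply: eq_bigr => b _.
rewrite exchange_big; apply: eq_bigr => C _.
rewrite -mulr_sumr; case: (posnP (k a b C)) => [->|kp]; first by rewrite !mul0r.
by congr (_ * _); rewrite -mu_triple //; apply: Hk.
Qed.

Lemma comb_ge0 (w : imsetV V) S : combinatorial w -> 0 <= mu w S.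
Proof.
case=> k [Hk Hw]; rewrite (mu_comb S Hk Hw).
do 3! (apply: sumr_ge0 => ? _); by rewrite mulr_ge0.
Qed.

Lemma mu_lin (u w : imsetV V) (n : nat) S :
  mu (fun T => n%:Z * u T - w T) S = n%:Z * mu u S - mu w S.
Proof. by rewrite /mu sumrB mulr_sumr. Qed.

Lemma comb_sub (u : imsetV V) (n : nat) (k : V -> V -> {set V} -> nat) a b C :
  (forall a b C, (0 < k a b C)%N -> elementary_index a b C) ->
  (forall S, n%:Z * u S = \sum_(a : V) \sum_(b : V) \sum_(C : {set V})
                      (k a b C)%:Z * u_triple [set a] [set b] C S) ->
  (0 < k a b C)%N ->
  represented u [set a] [set b] C.
Proof.
move=> Hk Hw kp.
exists n, (fun a' b' C' => (k a' b' C' - [&& a' == a, b' == b & C' == C])%N); split.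
  move=> a' b' C' H; apply: Hk; move: H; rewrite subn_gt0.
  by case: [&& _, _ & _] => //; apply: leq_trans.
move=> S; rewrite Hw.
have E : forall a' b' C', ((k a' b' C' - [&& a' == a, b' == b & C' == C])%N)%:Z =
    (k a' b' C')%:Z - ([&& a' == a, b' == b & C' == C] : nat)%:Z.
  move=> a' b' C'; rewrite -subzn //.
  case: (boolP [&& _, _ & _]) => // /and3P[/eqP-> /eqP-> /eqP->]; exact: kp.
symmetry.
transitivity (\sum_(a' : V) \sum_(b' : V) \sum_(C' : {set V})
   ((k a' b' C')%:Z * u_triple [set a'] [set b'] C' S -
    (([&& a' == a, b' == b & C' == C] : nat)%:Z * u_triple [set a'] [set b'] C' S))).
  apply: eq_bigr => a' _; apply: eq_bigr => b' _; apply: eq_bigr => C' _.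
  by rewrite E mulrBl.
have Hd : \sum_(a' : V) \sum_(b' : V) \sum_(C' : {set V})
    (([&& a' == a, b' == b & C' == C] : nat)%:Z * u_triple [set a'] [set b'] C' S)
    = u_triple [set a] [set b] C S.
  rewrite (bigD1 a) //= [X in _ + X = _]big1 ?addr0; last first.
    by move=> a' /negbTE na; apply: big1 => b' _; apply: big1 => C' _; rewrite na mul0r.
  rewrite (bigD1 b) //= [X in _ + X = _]big1 ?addr0; last first.
    by move=> b' /negbTE nb; apply: big1 => C' _; rewrite eqxx nb mul0r.
  rewrite (bigD1 C) //= [X in _ + X = _]big1 ?addr0; last first.
    by move=> C' /negbTE nc; rewrite !eqxx nc mul0r.
  by rewrite !eqxx mul1r.
rewrite -Hd -sumrB; apply: eq_bigr => a' _; rewrite -sumrB; apply: eq_bigr => b' _.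
by rewrite -sumrB.
Qed.



End Imset.

End Aux.
Import Aux.

Local Open Scope ring_scope.

Theorem proposition3p12 (V : finType) (d b : rel V) (HG : is_MAG d b)
  (u : imsetV V) (Hu : structural u)
  (HI : forall A B C : {set V}, disjoint_triple A B C ->
          (represented u A B C <-> msep d b A B C)) :
  forall S : {set V},
    (in_SG d b S -> char_imset u S = 1) /\
    (~ in_SG d b S -> S != set0 -> char_imset u S <= 0).
Proof.
case: HG => [[dirr birr bsym] Hacyc Hsib _].
have disj : forall (a bb : V) (C : {set V}), elementary_index a bb C ->
    disjoint_triple [set a] [set bb] C.
  move=> a bb C /and3P[ab aC bC]; rewrite /disjoint_triple !disjoints1 !inE ab aC.
  by rewrite bC.
move=> S; split.
- case=> H [A [hH At ES]].
  case: Hu => n [n0 [k [Hk Hw]]].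
  have E := mu_comb S Hk Hw.
  have : n%:Z * mu u S = 0.
    rewrite /mu mulr_sumr -/(mu (fun T => n%:Z * u T) S) E.
    apply: big1 => a _; apply: big1 => bb _; apply: big1 => C _.
    case: (posnP (k a bb C)) => [->|kp]; first by rewrite mul0r.
    case ind0: (ind a bb C S); last by rewrite mulr0.
    exfalso.
    have rep := comb_sub Hk Hw kp.
    have /(HI _ _ _ (disj _ _ _ (Hk _ _ _ kp))) ms := rep.
    case/and3P: ind0 => aS bS SC.
    have /and3P[ab _ _] := Hk _ _ _ kp.
    exact: (headA bsym Hacyc Hsib hH At ES aS bS ab SC ms).
  move/eqP; rewrite mulf_eq0 => /orP[/eqP [e]|/eqP m0]; first by move: n0; rewrite e.
  by rewrite /char_imset -/(mu u S) m0 subr0.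
- move=> nS Sn.
  case: (lemB dirr bsym Hacyc Sn nS) => a [bb [C [[ab aS bS aC bC] [SC ms]]]].
  have ei : elementary_index a bb C by rewrite /elementary_index ab aC bC.
  case/(HI _ _ _ (disj _ _ _ ei)): ms => k comb.
  have := comb_ge0 S comb; rewrite mu_lin mu_triple // /ind aS bS SC /= subr_ge0.
  rewrite /char_imset -/(mu u S) subr_le0.
  case: (lerP 1 (mu u S)) => // lt1 kle.
  have : (k%:Z * mu u S <= 0).
    by apply: mulr_ge0_le0 => //; rewrite -ltzD1 addrC; exact: lt1.
  by move=> H; move: (le_trans kle H).
Qed.
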